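(* (a) Let $n\ge 3$ be odd. The set $A=\{(0,0),(0,1),\dots,(0,n-2),(1,1),(1,2),\dots,(1,n-1)\}\subseteq\mathbb{Z}_n^2$ has $|A|=2n-2$ and contains no subset $S$ with $|S|=n$ and $\sum_{s\in S}s=(0,0)$; hence $g(\mathbb{Z}_n^2)\ge 2n-1$. (b) Let $n\ge 2$ be even. The set $B=\{0,1\}\times\mathbb{Z}_n\subseteq\mathbb{Z}_n^2$ has $|B|=2n$ and contains no subset $S$ with $|S|=n$ and $\sum_{s\in S}s=(0,0)$; hence $g(\mathbb{Z}_n^2)\ge 2n+1$.
   Context: For a finite abelian group $G$, $g(G)$ is the smallest positive integer $t$ such that every subset $X\subseteq G$ with $|X|\ge t$ contains a subset $S$ with $|S|=\exp(G)$ and $\sum_{s\in S}s=0_G$. Here $\exp(\mathbb{Z}_n^2)=n$. *)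

(* Defs.v *)
From HB Require Import structures.
From mathcomp Require Import all_boot all_order all_algebra.
Set Implicit Arguments. Unset Strict Implicit. Unset Printing Implicit Defensive.
Import GRing.Theory.
Local Open Scope ring_scope.

Notation Zn2 n := ('Z_n * 'Z_n)%type.

Definition has_zs_subset (n : nat) (X : {set Zn2 n}) : bool :=
  [exists S : {set Zn2 n}, [&& S \subset X, #|S| == n & \sum_(s in S) s == 0]].

(* t has the defining property of g(Z_n^2), with exp(Z_n^2) = n. *)
Definition g_prop (n t : nat) : bool :=
  (0 < t)%N && [forall X : {set Zn2 n}, (t <= #|X|)%N ==> has_zs_subset X].

Lemma g_prop_ex (n : nat) : exists t, g_prop n t.
Proof.
exists #|[set: Zn2 n]|.+1; rewrite /g_prop /=; apply/forallP => X.
by rewrite ltnNge subset_leq_card // subsetT.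
Qed.

Definition g_Zn2 (n : nat) : nat := ex_minn (g_prop_ex n).

Definition setA (n : nat) : {set Zn2 n} :=
  [set ((0 : 'Z_n), (j%:R : 'Z_n)) | j : 'I_(n.-1)]
  :|: [set ((1 : 'Z_n), ((j.+1)%:R : 'Z_n)) | j : 'I_(n.-1)].

Definition setB (n : nat) : {set Zn2 n} :=
  [set x : Zn2 n | (x.1 == 0) || (x.1 == 1)].

(* Main.v *)
Require Import Defs.
From mathcomp Require Import all_boot all_order all_algebra.
From mathcomp Require Import zify.
Set Implicit Arguments. Unset Strict Implicit. Unset Printing Implicit Defensive.
Import GRing.Theory.

Section Aux.
Local Open Scope ring_scope.

Lemma g_lb n (X : {set Zn2 n}) : ~~ has_zs_subset X -> (#|X|.+1 <= g_Zn2 n)%N.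
Proof.
rewrite /g_Zn2; case: ex_minnP => g /andP[_ /forallP H] _ hX.
rewrite ltnNge; apply/negP => hg.
by move: (H X); rewrite hg /= (negbTE hX).
Qed.

Lemma fst_sum n (S : {set Zn2 n}) : (\sum_(s in S) s).1 = \sum_(s in S) s.1.
Proof. exact: (big_morph fst (fun _ _ => erefl) erefl). Qed.

Lemma snd_sum n (S : {set Zn2 n}) : (\sum_(s in S) s).2 = \sum_(s in S) s.2.
Proof. exact: (big_morph snd (fun _ _ => erefl) erefl). Qed.

Definition row n (c : 'Z_n) : {set Zn2 n} := [set s | s.1 == c].

Lemma card_row m (c : 'Z_m.+2) : #|row c| = m.+2.
Proof.
have -> : row c = setX [set c] setT by apply/setP => s; rewrite !inE andbT.
by rewrite cardsX cards1 cardsT card_ord mul1n.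
Qed.

Lemma sum_row2 m (c : 'Z_m.+2) : \sum_(s in row c) s.2 = \sum_(x : 'Z_m.+2) x.
Proof.
have -> : row c = (pair c) @: setT.
  apply/setP => s; rewrite inE; apply/eqP/imsetP => [<-|[x _ ->]] //.
  by exists s.2; rewrite ?inE //; case: s.
rewrite big_imset /=; last by move=> x y _ _ [].
by apply: eq_bigl => x; rewrite inE.
Qed.

Lemma sum_Zn m : ~~ odd m -> \sum_(x : 'Z_m.+2) x != 0.
Proof.
move=> hm.
have -> : \sum_(x : 'Z_m.+2) x = (\sum_(i < m.+2) (i : nat))%:R.
  rewrite natr_sum; apply: eq_bigr => x _; by rewrite natr_Zp.
apply/eqP => /(congr1 val); rewrite Zp_nat /=.
rewrite -(big_mkord xpredT (fun i => i)) bin2_sum bin2; change (Zp_trunc m.+2).+2 with m.+2.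
have [q hq] : exists q, m = (q * 2)%N.
  by exists m./2; rewrite -[LHS](odd_double_half m) (negbTE hm) add0n -mul2n mulnC.
subst m.
have -> : ((q * 2).+2 * (q * 2).+1)./2 = ((q.+1) * (q * 2).+1)%N.
  by rewrite -divn2 -[(q*2).+2]/((q.+1) * 2)%N mulnAC mulnK.
have -> : ((q.+1) * (q * 2).+1 = q * (q * 2).+2 + q.+1)%N by lia.
by rewrite modnMDl modn_small //; lia.
Qed.

Lemma fst_count m (S : {set Zn2 m.+2}) : S \subset setB m.+2 ->
  (\sum_(s in S) s).1 = #|S :&: row (1%R)|%:R.
Proof.
move=> sSB; rewrite fst_sum (bigID (fun s => s.1 == 1)) /=.
rewrite [X in _ + X]big1 ?addr0; last first.
  move=> s /andP[sS /negbTE s1]; move: (subsetP sSB s sS); rewrite inE s1 orbF.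
  by move/eqP.
rewrite -sum1_card natr_sum.
transitivity (\sum_(i in S | i.1 == 1) (1 : 'Z_m.+2)).
  by apply: eq_bigr => s /andP[_ /eqP ->].
by apply: eq_big => [s|s _]; rewrite ?inE.
Qed.

Lemma zero_count m (S : {set Zn2 m.+2}) : S \subset setB m.+2 ->
  \sum_(s in S) s == 0 -> (m.+2 %| #|S :&: row (1%R)|)%N.
Proof.
move=> sSB /eqP /(congr1 fst); rewrite fst_count // => /(congr1 val).
by rewrite Zp_nat /= => /eqP.
Qed.

End Aux.

Theorem mainTheorem4 :
  (forall n : nat, (3 <= n)%N -> odd n ->
     [/\ #|setA n| = (2 * n - 2)%N, ~~ has_zs_subset (setA n)
       & (2 * n - 1 <= g_Zn2 n)%N]) /\
  (forall n : nat, (2 <= n)%N -> ~~ odd n ->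
     [/\ #|setB n| = (2 * n)%N, ~~ has_zs_subset (setB n)
       & (2 * n + 1 <= g_Zn2 n)%N]).
Proof.
split.
- case=> [|[|m]] // _ _.
  set f0 := fun j : 'I_(m.+2).-1 => ((0%R : 'Z_m.+2), (j%:R%R : 'Z_m.+2)).
  set f1 := fun j : 'I_(m.+2).-1 => ((1%R : 'Z_m.+2), ((j.+1)%:R%R : 'Z_m.+2)).
  have hA : setA m.+2 = [set f0 j | j : _] :|: [set f1 j | j : _] by [].
  have hcard : #|setA m.+2| = (2 * m.+2 - 2)%N.
    rewrite hA cardsU.
    have -> : [set f0 j | j : _] :&: [set f1 j | j : _] = set0.
      apply/setP => s; rewrite !inE; apply/negP => /andP[/imsetP[i _ ->]].
      case/imsetP => j _ [] /eqP; rewrite eq_sym oner_eq0 //.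
    rewrite cards0 subn0 !card_imset ?card_ord /=; first by lia.
    + move=> i j [] /(congr1 val); rewrite !Zp_nat /=; change (Zp_trunc m.+2).+2 with m.+2.
      rewrite !modn_small; first (by move=> /eqP; rewrite ?eqSS => /eqP /val_inj);
        have := ltn_ord i; have := ltn_ord j; rewrite /=; lia.
    + move=> i j [] /(congr1 val); rewrite !Zp_nat /=; change (Zp_trunc m.+2).+2 with m.+2.
      rewrite !modn_small; first (by move=> /eqP; rewrite ?eqSS => /eqP /val_inj);
        have := ltn_ord i; have := ltn_ord j; rewrite /=; lia.
  have hnz : ~~ has_zs_subset (setA m.+2).
    apply/existsP => -[S /and3P[sSA /eqP cS s0]].
    have sAB : setA m.+2 \subset setB m.+2.
      apply/subsetP => s; rewrite hA !inE => /orP[] /imsetP[j _ ->];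
        by rewrite eqxx ?orbT.
    have := zero_count (subset_trans sSA sAB) s0.
    have h1 : (#|S :&: row (1%R)| <= m.+1)%N.
      rewrite -[m.+1]/((m.+2).-1) -[X in (_ <= X)%N](card_ord (m.+2).-1) -cardsT.
      apply: leq_trans (leq_imset_card f1 _); apply: subset_leq_card.
      apply/subsetP => x; rewrite !inE => /andP[xS /eqP x1].
      move: (subsetP sSA x xS); rewrite hA inE => /orP[] /imsetP[j _ xj].
        by move: x1; rewrite xj /= => /eqP; rewrite eq_sym oner_eq0.
      by apply/imsetP; exists j.
    have h0 : (#|S :\: row (1%R)| <= m.+1)%N.
      rewrite -[m.+1]/((m.+2).-1) -[X in (_ <= X)%N](card_ord (m.+2).-1) -cardsT.
      apply: leq_trans (leq_imset_card f0 _); apply: subset_leq_card.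
      apply/subsetP => x; rewrite !inE => /andP[x1 xS].
      move: (subsetP sSA x xS); rewrite hA inE => /orP[] /imsetP[j _ xj].
        by apply/imsetP; exists j.
      by move: x1; rewrite xj /f1 /= ?eqxx.
    have := cardsID (row (1%R)) S; rewrite cS => hS.
    case/dvdnP => q hq; move: h1 h0 hS; rewrite hq.
    case: q hq => [|q] _; lia.
  split => //.
  by have := g_lb hnz; rewrite hcard; lia.
- case=> [|[|m]] // _ hodd.
  have hB : setB m.+2 = row (0%R) :|: row (1%R) by apply/setP => s; rewrite !inE.
  have hcard : #|setB m.+2| = (2 * m.+2)%N.
    rewrite hB cardsU.
    have -> : row (0%R) :&: row (1%R) = set0 :> {set Zn2 m.+2}.
      apply/setP => s; rewrite !inE; apply/negP => /andP[/eqP -> ].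
      by rewrite eq_sym oner_eq0.
    by rewrite cards0 subn0 !card_row; lia.
  have hnz : ~~ has_zs_subset (setB m.+2).
    apply/existsP => -[S /and3P[sSB /eqP cS s0]].
    have : exists c : 'Z_m.+2, S = row c.
      have := zero_count sSB s0.
      have h1 : (#|S :&: row (1%R)| <= m.+2)%N.
        by apply: leq_trans (subset_leq_card (subsetIr _ _)) _; rewrite card_row.
      case/dvdnP => q hq; move: h1; rewrite hq; case: q hq => [|[|q]] hq; last by lia.
      + move=> _; exists 0%R; apply/eqP; rewrite eqEcard card_row cS leqnn andbT.
        apply/subsetP => s sS; move: (subsetP sSB s sS); rewrite !inE => /orP[] // s1.
        have : (0 < #|S :&: row (1%R)|)%N by apply/card_gt0P; exists s; rewrite !inE sS.
        by rewrite hq.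
      + move=> _; exists 1%R; apply/eqP; rewrite eq_sym eqEcard card_row cS leqnn andbT.
        have : S :&: row (1%R) == row (1%R).
          by rewrite eqEcard subsetIr card_row hq mul1n leqnn.
        by move/eqP <-; apply: subsetIl.
    case=> c Sc; move/eqP/(congr1 snd): s0; rewrite snd_sum Sc sum_row2 /=.
    by move/eqP; rewrite (negbTE (sum_Zn (m:=m) _)) // -(negbK (odd m)).
  split => //.
  by have := g_lb hnz; rewrite hcard; lia.
Qed.
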